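(* Let $\mathcal{C}$ be a category and $\mathcal{W}$ a class of morphisms of $\mathcal{C}$ satisfying (L0) and (L1). Let $\mathcal{W}_L$ be the class of morphisms generated under composition by $\mathcal{W}$ and all split monomorphisms of $\mathcal{C}$. Then the following two conditions are equivalent: (L2): for every $w\in\mathcal{W}$ and parallel morphisms $f_1,f_2$ with $\mathrm{dom}(f_i)=\mathrm{cod}(w)$ and $f_1w=f_2w$, there exists $w'\in\mathcal{W}$ with $\mathrm{dom}(w')=\mathrm{cod}(f_1)$ and $w'f_1=w'f_2$; (L2'): for every $w\in\mathcal{W}$ and parallel morphisms $f_1,f_2$ with $\mathrm{dom}(f_i)=\mathrm{cod}(w)$ and $f_1w=f_2w$, there exists $w'\in\mathcal{W}_L$ with $\mathrm{dom}(w')=\mathrm{cod}(f_1)$ and $w'f_1=w'f_2$. Here (L0): $\mathcal{W}$ contains all identity morphisms and is closed under composition; (L1): for every $w\in\mathcal{W}$ and every morphism $f$ with $\mathrm{dom}(f)=\mathrm{dom}(w)$ there exist $w'\in\mathcal{W}$ with $\mathrm{dom}(w')=\mathrm{cod}(f)$ and a morphism $f'$ with $\mathrm{dom}(f')=\mathrm{cod}(w)$, $\mathrm{cod}(f')=\mathrm{cod}(w')$, such that $w'f=f'w$.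
   Context: A split monomorphism is a morphism $m$ having a left inverse $e$, i.e. $em=\mathrm{id}$. *)

(* Defs.v *)
Set Implicit Arguments.
Unset Strict Implicit.

Record Category := {
  Ob :> Type;
  Hom : Ob -> Ob -> Type;
  idm : forall a : Ob, Hom a a;
  comp : forall a b c : Ob, Hom b c -> Hom a b -> Hom a c;
  comp_assoc : forall (a b c d : Ob) (h : Hom c d) (g : Hom b c) (f : Hom a b),
      comp h (comp g f) = comp (comp h g) f;
  comp_id_l : forall (a b : Ob) (f : Hom a b), comp (idm b) f = f;
  comp_id_r : forall (a b : Ob) (f : Hom a b), comp f (idm a) = f
}.

Arguments Hom {C} _ _ : rename.
Arguments idm {C} _ : rename.
Arguments comp {C a b c} _ _ : rename.

Definition MorClass (C : Category) := forall a b : C, Hom a b -> Prop.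

Definition split_mono (C : Category) (a b : C) (m : Hom a b) : Prop :=
  exists e : Hom b a, comp e m = idm a.

Inductive WL (C : Category) (W : MorClass C) : forall a b : C, Hom a b -> Prop :=
  | WL_W : forall (a b : C) (w : Hom a b), W a b w -> WL W w
  | WL_split : forall (a b : C) (m : Hom a b), split_mono m -> WL W m
  | WL_comp : forall (a b c : C) (g : Hom b c) (f : Hom a b),
      WL W g -> WL W f -> WL W (comp g f).

Definition L0 (C : Category) (W : MorClass C) : Prop :=
  (forall a : C, W a a (idm a)) /\
  (forall (a b c : C) (g : Hom b c) (f : Hom a b),
      W b c g -> W a b f -> W a c (comp g f)).

Definition L1 (C : Category) (W : MorClass C) : Prop :=
  forall (a b c : C) (w : Hom a b) (f : Hom a c), W a b w ->
    exists (d : C) (w' : Hom c d) (f' : Hom b d),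
      W c d w' /\ comp w' f = comp f' w.

Definition L2_with (C : Category) (W V : MorClass C) : Prop :=
  forall (a b c : C) (w : Hom a b) (f1 f2 : Hom b c),
    W a b w -> comp f1 w = comp f2 w ->
    exists (d : C) (w' : Hom c d), V c d w' /\ comp w' f1 = comp w' f2.

Definition L2 (C : Category) (W : MorClass C) : Prop := L2_with W W.
Definition L2' (C : Category) (W : MorClass C) : Prop := L2_with W (@WL C W).

(* Main.v *)
Require Import Defs.

Lemma key (C : Category) (W : MorClass C) :
  L0 W -> L1 W ->
  forall (c d : C) (v : Hom c d), WL W v ->
  forall (e : C) (u : Hom d e), W d e u ->
  forall (x : C) (f1 f2 : Hom x c), comp u (comp v f1) = comp u (comp v f2) ->
  exists (q : C) (w' : Hom c q), W c q w' /\ comp w' f1 = comp w' f2.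
Proof.
  intros [Hid Hcomp] HL1 c d v Hv.
  induction Hv as [a b w Hw | a b m [r Hr] | a b c0 g f Hg IHg Hf IHf];
    intros e u Hu x f1 f2 Heq.
  - exists e, (comp u w). split. apply Hcomp; assumption.
    rewrite <- !comp_assoc. exact Heq.
  - destruct (HL1 _ _ _ u r Hu) as [q [w'' [h [Hw'' Hc]]]].
    exists q, w''. split; [exact Hw''|].
    assert (E : w'' = comp h (comp u m)).
    { rewrite <- (comp_id_r w''), <- Hr, comp_assoc, Hc, <- comp_assoc. reflexivity. }
    rewrite E, <- !comp_assoc, Heq. reflexivity.
  - assert (Heq' : comp u (comp g (comp f f1)) = comp u (comp g (comp f f2))).
    { rewrite !comp_assoc. rewrite !comp_assoc in Heq. rewrite <- !comp_assoc.
      rewrite <- !comp_assoc in Heq. exact Heq. }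
    destruct (IHg e u Hu x (comp f f1) (comp f f2) Heq') as [q [w' [Hw' E]]].
    exact (IHf q w' Hw' x f1 f2 E).
Qed.

Theorem mainTheorem2 (C : Category) (W : MorClass C) :
  L0 W -> L1 W -> (L2 W <-> L2' W).
Proof.
  intros H0 H1. split.
  - intros H a b c w f1 f2 Hw Heq.
    destruct (H a b c w f1 f2 Hw Heq) as [d [w' [Hw' E]]].
    exists d, w'. split; [apply WL_W; exact Hw'|exact E].
  - intros H a b c w f1 f2 Hw Heq.
    destruct (H a b c w f1 f2 Hw Heq) as [d [v [Hv E]]].
    apply (@key C W H0 H1 _ _ _ Hv _ _ (proj1 H0 d)).
    rewrite E. reflexivity.
Qed.
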